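(* Let $K\subset\mathbb{R}^n$ and $C\subset\mathbb{R}^m$ be nonempty, convex, closed and bounded sets, and let $f,h:\mathbb{R}^n\times\mathbb{R}^m\to\mathbb{R}$ be continuous functions such that, for every $y\in K$, $f(y,\cdot)$ and $h(y,\cdot)$ are convex, and such that $f$ takes only positive values. Let $\varepsilon>\varepsilon'>0$, let $y_\varepsilon$ (resp. $y_{\varepsilon'}$) be an optimal solution of $(\mathcal{P}_\varepsilon)$ (resp. $(\mathcal{P}_{\varepsilon'})$), and let $x_\varepsilon\in\mathcal{S}_\varepsilon(y_\varepsilon)$, $x_{\varepsilon'}\in\mathcal{S}_{\varepsilon'}(y_{\varepsilon'})$. Let $y^*$ be an optimal solution of $(\widetilde{\mathcal{P}})$ and $x^*\in\mathcal{S}(y^* )$. Then $$f^2(y_\varepsilon,x_\varepsilon)\le f^2(y_{\varepsilon'},x_{\varepsilon'})\le f^2(y^*,x^* ).$$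
   Context: $f^2=(f)^2$. For $y\in K$: $\mathcal{S}(y)=\operatorname{argmin}\{h(y,z)\mid z\in C\}$; for $\varepsilon>0$, $\mathcal{S}_\varepsilon(y)=\operatorname{argmin}\{h(y,z)+\varepsilon f^2(y,z)\mid z\in C\}$; $\widetilde{\mathcal{S}}(y)=\operatorname{argmin}\{f^2(y,z)\mid z\in\mathcal{S}(y)\}$. $(\mathcal{P}_\varepsilon)$: maximize $f(y,x)$ over $y\in K$, $x\in\mathcal{S}_\varepsilon(y)$; $y_\varepsilon\in K$ is optimal if $f(y_\varepsilon,x')\ge f(y,x)$ for all $x'\in\mathcal{S}_\varepsilon(y_\varepsilon)$, $y\in K$, $x\in\mathcal{S}_\varepsilon(y)$. $(\widetilde{\mathcal{P}})$: maximize $f(y,x)$ over $y\in K$, $x\in\widetilde{\mathcal{S}}(y)$; $y^*\in K$ is optimal if $f(y^*,x')\ge f(y,x)$ for all $x'\in\widetilde{\mathcal{S}}(y^* )$, $y\in K$, $x\in\widetilde{\mathcal{S}}(y)$. *)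

(* Defs.v *)
From HB Require Import structures.
From mathcomp Require Import all_boot all_order all_algebra.
From mathcomp Require Import all_classical all_reals all_analysis.
Set Implicit Arguments. Unset Strict Implicit. Unset Printing Implicit Defensive.
Import Order.TTheory GRing.Theory Num.Theory.
Import numFieldNormedType.Exports.
Local Open Scope classical_set_scope.
Local Open Scope ring_scope.

Section Bilevel.
Variables (R : realType) (n m : nat).
Notation Vn := 'rV[R]_n.
Notation Vm := 'rV[R]_m.

Definition convex_set_in (k : nat) (A : set 'rV[R]_k) : Prop :=
  forall x y (t : R), A x -> A y -> 0 <= t -> t <= 1 ->
    A (t *: x + (1 - t) *: y).

Definition convex_fun_on (k : nat) (g : 'rV[R]_k -> R) : Prop :=
  forall x y (t : R), 0 <= t -> t <= 1 ->
    g (t *: x + (1 - t) *: y) <= t * g x + (1 - t) * g y.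

Definition argmin_set (k : nat) (g : 'rV[R]_k -> R) (A : set 'rV[R]_k)
  : set 'rV[R]_k :=
  [set z | A z /\ forall z', A z' -> g z <= g z'].

Variables (C : set Vm) (f h : Vn -> Vm -> R).

Definition f2 (y : Vn) (x : Vm) : R := (f y x) ^+ 2.

Definition S_ (y : Vn) : set Vm := argmin_set (h y) C.
Definition S_eps (eps : R) (y : Vn) : set Vm :=
  argmin_set (fun z => h y z + eps * f2 y z) C.
Definition S_tilde (y : Vn) : set Vm := argmin_set (f2 y) (S_ y).

Definition optimal_P_eps (K : set Vn) (eps : R) (ye : Vn) : Prop :=
  K ye /\ forall x' y x, S_eps eps ye x' -> K y -> S_eps eps y x ->
    f y x <= f ye x'.

Definition optimal_P_tilde (K : set Vn) (ys : Vn) : Prop :=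
  K ys /\ forall x' y x, S_tilde ys x' -> K y -> S_tilde y x ->
    f y x <= f ys x'.

End Bilevel.

(* Main.v *)
Require Import Defs.
From HB Require Import structures.
From mathcomp Require Import all_boot all_order all_algebra.
From mathcomp Require Import all_classical all_reals all_analysis.
From mathcomp Require Import lra.
Import Order.TTheory GRing.Theory Num.Theory.
Import numFieldNormedType.Exports.
Local Open Scope classical_set_scope.
Local Open Scope ring_scope.

Lemma sec_cont {R : realType} {n m} {f : 'rV[R]_n -> 'rV[R]_m -> R} y :
  continuous (fun p : 'rV[R]_n * 'rV[R]_m => f p.1 p.2) -> continuous (f y).
Proof.
move=> hf z.
have := @continuous_comp _ _ _ (fun z : 'rV[R]_m => (y, z)) (fun p : 'rV[R]_n * 'rV[R]_m => f p.1 p.2) z.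
apply; last exact: hf.
apply: (@cvg_pair _ _ _ (nbhs z) (nbhs y) (nbhs z)); [exact: cvg_cst | exact: cvg_id].
Qed.

Lemma ex_argmin {R : realType} {m} {g : 'rV[R]_m -> R} {A : set 'rV[R]_m} :
  A !=set0 -> compact A -> continuous g ->
  exists z, argmin_set g A z.
Proof.
move=> A0 cA cg.
have [c cA' hc] := EVT_min_rV A0 cA (continuous_subspaceT cg).
exists c; split; first by rewrite inE in cA'.
by move=> z Az; apply: hc; rewrite inE.
Qed.

Lemma argmin_compact (R : realType) m (g : 'rV[R]_m -> R) (A : set 'rV[R]_m) :
  compact A -> continuous g -> compact (argmin_set g A).
Proof.
move=> cA cg.
case: (pselect (A !=set0)) => [A0|An0]; last first.
  have -> : argmin_set g A = set0.
    apply/seteqP; split => z // [Az _]; apply: An0; by exists z.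
  exact: compact0.
have [c [Ac hc]] := ex_argmin A0 cA cg.
have -> : argmin_set g A = A `&` (g @^-1` [set x | x <= g c]).
  apply/seteqP; split => z.
    by move=> [Az hz]; split => //; apply: hz.
  move=> [Az /= hz]; split => // z' Az'; exact: le_trans hz (hc _ Az').
apply: compact_closedI => //.
by move/continuous_closedP: cg; apply; exact: closed_le.
Qed.

Lemma cont_f2 {R : realType} {n m} {f : 'rV[R]_n -> 'rV[R]_m -> R} y :
  continuous (fun p : 'rV[R]_n * 'rV[R]_m => f p.1 p.2) ->
  continuous (f2 f y).
Proof.
move=> hf; have cf := sec_cont y hf.
move=> z; rewrite /f2.
change {for z, continuous (f y \* f y)}.
apply: continuousM; exact: cf.
Qed.

Lemma cont_pen (R : realType) n m (f h : 'rV[R]_n -> 'rV[R]_m -> R) y (e : R) :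
  continuous (fun p : 'rV[R]_n * 'rV[R]_m => f p.1 p.2) ->
  continuous (fun p : 'rV[R]_n * 'rV[R]_m => h p.1 p.2) ->
  continuous (fun z => h y z + e * f2 f y z).
Proof.
move=> hf hh; have cf := cont_f2 y hf; have ch := sec_cont y hh.
move=> z.
change {for z, continuous (h y + ((fun=> e) \* f2 f y))}.
apply: continuousD; first exact: ch.
apply: continuousM; first exact: cst_continuous.
exact: cf.
Qed.

Theorem lemma4p2 (R : realType) (n m : nat)
  (K : set 'rV[R]_n) (C : set 'rV[R]_m)
  (f h : 'rV[R]_n -> 'rV[R]_m -> R)
  (hK0 : K !=set0) (hKconv : convex_set_in K) (hKcl : closed K)
  (hKb : bounded_set K)
  (hC0 : C !=set0) (hCconv : convex_set_in C) (hCcl : closed C)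
  (hCb : bounded_set C)
  (hfc : continuous (fun p : 'rV[R]_n * 'rV[R]_m => f p.1 p.2))
  (hhc : continuous (fun p : 'rV[R]_n * 'rV[R]_m => h p.1 p.2))
  (hfconv : forall y, K y -> convex_fun_on (f y))
  (hhconv : forall y, K y -> convex_fun_on (h y))
  (hfpos : forall y x, 0 < f y x)
  (eps eps' : R) (heps' : 0 < eps') (heps : eps' < eps)
  (ye ye' : 'rV[R]_n) (xe xe' : 'rV[R]_m)
  (hye : optimal_P_eps C f h K eps ye)
  (hye' : optimal_P_eps C f h K eps' ye')
  (hxe : S_eps C f h eps ye xe) (hxe' : S_eps C f h eps' ye' xe')
  (ys : 'rV[R]_n) (xs : 'rV[R]_m)
  (hys : optimal_P_tilde C f h K ys) (hxs : S_ C h ys xs) :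
  f2 f ye xe <= f2 f ye' xe' /\ f2 f ye' xe' <= f2 f ys xs.
Proof.
have cC := bounded_closed_compact hCb hCcl.
split.
  have [x2 hx2] := ex_argmin hC0 cC (@cont_pen _ _ _ f h ye eps' hfc hhc).
  have A := hxe.2 x2 hx2.1.
  have B := hx2.2 xe hxe.1.
  have Cc := hye'.2 xe' ye x2 hxe' hye.1 hx2.
  have p1 := hfpos ye x2.
  have p2 := hfpos ye xe.
  move: A B Cc p1 p2; rewrite /f2 /= !expr2 => A B Cc p1 p2.
  have D : f ye xe * f ye xe <= f ye x2 * f ye x2 by nra.
  nra.
have tilde_ne : forall y, exists x, S_tilde C f h y x.
  move=> y; rewrite /S_tilde; apply: ex_argmin.
  - have [z hz] := ex_argmin hC0 cC (sec_cont y hhc); by exists z.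
  - exact: argmin_compact cC (sec_cont y hhc).
  - exact: cont_f2.
have [xt hxt] := tilde_ne ye'.
have [xs' hxs'] := tilde_ne ys.
have A := hys.2 xs' ye' xt hxs' hye'.1 hxt.
have B := hxs'.2 xs hxs.
have Cc := hxt.1.2 xe' hxe'.1.
have D := hxe'.2 xt hxt.1.1.
have p1 := hfpos ye' xt.
move: A B Cc D p1; rewrite /f2 /= !expr2 => A B Cc D p1.
have E : f ye' xt * f ye' xt <= f ys xs' * f ys xs' by nra.
nra.
Qed.
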